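(* $conv\leq_{K}\mathcal{S}pl$.
   Context: $conv$ is the ideal on $\mathbb{Q}\cap[0,1]$ generated by sequences in $\mathbb{Q}\cap[0,1]$ converging in $[0,1]$. For an infinite $A\subseteq\omega$, let $S(A)$ be the set of all $\sigma\in2^{<\omega}$ such that $\sigma$ is constant on $A\cap\mathrm{dom}(\sigma)$. The splitting ideal $\mathcal{S}pl$ is the ideal on $2^{<\omega}$ generated by the sets $S(A)$, $A\in[\omega]^{\omega}$. For ideals $\mathcal{J}_0,\mathcal{J}_1$ on countable sets $X_0,X_1$, $\mathcal{J}_{0}\leq_{K}\mathcal{J}_{1}$ means there is a function $\pi:X_1\rightarrow X_0$ with $\pi^{-1}[A]\in\mathcal{J}_{1}$ for every $A\in\mathcal{J}_{0}$. *)

(* Defs.v *)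
From Stdlib Require Import Reals QArith Qcanon List.
Open Scope R_scope.

(* The countable set Q ∩ [0,1], using canonical rationals Qc (one element per rational). *)
Definition QI := { q : Qc | (0 <= q /\ q <= 1)%Qc }.
Definition QI2R (x : QI) : R := Q2R (this (proj1_sig x)).

(* 2^{<ω}: finite binary strings; dom σ = {0,...,length σ - 1}, σ(i) = nth i σ false. *)
Definition str := list bool.

Definition gen_ideal {X : Type} (G : (X -> Prop) -> Prop) (B : X -> Prop) : Prop :=
  exists l : list (X -> Prop), Forall G l /\
    forall x, B x -> exists C, In C l /\ C x.

Definition conv_gen (C : QI -> Prop) : Prop :=
  exists (f : nat -> QI) (l : R), 0 <= l <= 1 /\
    Un_cv (fun n => QI2R (f n)) l /\ (forall x, C x <-> exists n, f n = x).

Definition conv : (QI -> Prop) -> Prop := gen_ideal conv_gen.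

Definition infinite_nat (A : nat -> Prop) : Prop := forall n, exists m, (n <= m)%nat /\ A m.

Definition S_of (A : nat -> Prop) (s : str) : Prop :=
  forall i j, A i -> A j -> (i < length s)%nat -> (j < length s)%nat ->
    nth i s false = nth j s false.

Definition spl_gen (C : str -> Prop) : Prop :=
  exists A, infinite_nat A /\ (forall s, C s <-> S_of A s).

Definition Spl : (str -> Prop) -> Prop := gen_ideal spl_gen.

Definition katetov_le {X0 X1 : Type} (J0 : (X0 -> Prop) -> Prop) (J1 : (X1 -> Prop) -> Prop) : Prop :=
  exists pi : X1 -> X0, forall A, J0 A -> J1 (fun x => A (pi x)).

(* Main.v *)
Require Import Defs.
From Stdlib Require Import Reals QArith Qcanon List Qreals Lra Lia Classical ClassicalEpsilon.
Open Scope R_scope.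

Definition digit (b : bool) : R := if b then 4 else 2.
Fixpoint vR (l : list bool) : R :=
  match l with nil => 0 | b :: l' => (digit b + vR l') / 5 end.
Fixpoint vQ (l : list bool) : Q :=
  match l with nil => 0%Q | b :: l' => (((if b then 4 else 2) + vQ l') * (1#5))%Q end.

Lemma vQ_R l : Q2R (vQ l) = vR l.
Proof.
  induction l as [|a l IH]; simpl.
  - unfold Q2R; simpl; field.
  - rewrite Q2R_mult, Q2R_plus, IH.
    assert (H5 : Q2R (1#5) = / 5) by (unfold Q2R; simpl; field).
    rewrite H5. destruct a; unfold digit; unfold Q2R at 1; simpl; field.
Qed.

Lemma vR_bounds l : 0 <= vR l <= 1.
Proof. induction l as [|a l IH]; simpl; [lra|]. destruct a; unfold digit; lra. Qed.

Lemma sep K : forall c c', Rabs (vR c - vR c') * 5 ^ K < 1 ->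
  forall i, (i < K)%nat -> nth_error c i = nth_error c' i.
Proof.
  induction K as [|K IH]; intros c c' H i Hi; [lia|].
  assert (HK : 1 <= 5 ^ K) by (apply pow_R1_Rle; lra).
  assert (Ha : 0 <= Rabs (vR c - vR c')) by apply Rabs_pos.
  simpl in H.
  assert (H1 : Rabs (vR c - vR c') * 5 < 1) by nra.
  destruct c as [|b l]; destruct c' as [|b' l'].
  - reflexivity.
  - exfalso. simpl in H1. pose proof (vR_bounds l').
    destruct b'; unfold digit in H1; rewrite Rabs_left1 in H1; lra.
  - exfalso. simpl in H1. pose proof (vR_bounds l).
    destruct b; unfold digit in H1; rewrite Rabs_right in H1; lra.
  - simpl in H1. pose proof (vR_bounds l). pose proof (vR_bounds l').
    assert (Hb : b = b').
    { destruct b, b'; auto; exfalso; unfold digit in H1;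
      unfold Rabs in H1; destruct Rcase_abs in H1; lra. }
    subst b'. destruct i as [|i]; [reflexivity|]. simpl.
    apply IH; [|lia]. simpl in H.
    replace ((digit b + vR l) / 5 - (digit b + vR l') / 5) with ((vR l - vR l') / 5) in H by field.
    unfold Rdiv in H; rewrite Rabs_mult, (Rabs_right (/ 5)) in H by (apply Rle_ge; left; apply Rinv_0_lt_compat; lra).
    replace (Rabs (vR l - vR l') * / 5 * (5 * 5 ^ K)) with (Rabs (vR l - vR l') * 5 ^ K) in H by field.
    exact H.
Qed.
Lemma vQ_in l : (0 <= Q2Qc (vQ l) /\ Q2Qc (vQ l) <= 1)%Qc.
Proof.
  pose proof (vR_bounds l).
  split; unfold Qcle; apply Rle_Qle; simpl;
  rewrite (Qeq_eqR _ _ (Qred_correct _)), vQ_R; unfold Q2R; simpl; lra.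
Qed.

Definition relc (s : str) : list bool := map (fun b => xorb b (hd false s)) s.
Definition pi (s : str) : QI := exist _ (Q2Qc (vQ (relc s))) (vQ_in (relc s)).

Lemma pi_R s : QI2R (pi s) = vR (relc s).
Proof. unfold QI2R, pi; simpl. rewrite (Qeq_eqR _ _ (Qred_correct _)). apply vQ_R. Qed.

Lemma agree s t K : Rabs (QI2R (pi s) - QI2R (pi t)) * 5 ^ K < 1 ->
  forall i, (i < K)%nat -> nth_error (relc s) i = nth_error (relc t) i.
Proof. rewrite !pi_R. apply sep. Qed.

Lemma pi_len s t : pi s = pi t -> length s = length t.
Proof.
  intro E.
  assert (H : forall i, nth_error (relc s) i = nth_error (relc t) i).
  { intro i. apply (agree s t (S i)); [|lia]. rewrite E. 
    replace (QI2R (pi t) - QI2R (pi t)) with 0 by ring. rewrite Rabs_R0. lra. }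
  assert (L : length (relc s) = length (relc t)).
  { destruct (Nat.lt_trichotomy (length (relc s)) (length (relc t))) as [Hl|[Hl|Hl]]; auto; exfalso.
    - pose proof (proj2 (nth_error_Some (relc t) (length (relc s))) Hl).
      rewrite <- H in H0. apply H0. apply nth_error_None. lia.
    - pose proof (proj2 (nth_error_Some (relc s) (length (relc t))) Hl).
      rewrite H in H0. apply H0. apply nth_error_None. lia. }
  unfold relc in L. rewrite !length_map in L. exact L.
Qed.

Lemma cauchy u l : Un_cv u l -> forall eps, eps > 0 -> exists N, forall n m,
  (N <= n)%nat -> (N <= m)%nat -> Rabs (u n - u m) < eps.
Proof.
  intros H eps He. destruct (H (eps/2)) as [N HN]; [lra|].
  exists N. intros n m Hn Hm. specialize (HN n Hn) as A. specialize (HN m Hm) as B.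
  unfold R_dist in *. 
  replace (u n - u m) with ((u n - l) - (u m - l)) by ring.
  eapply Rle_lt_trans; [apply Rabs_triang|]. rewrite Rabs_Ropp. lra.
Qed.

Definition good (f : nat -> QI) (q : bool) (x N : nat) : Prop :=
  forall s n, f n = pi s -> (N <= n)%nat -> forall b, nth_error (relc s) x = Some b -> b = q.

Lemma goodex f l : Un_cv (fun n => QI2R (f n)) l -> forall x, exists q N, good f q x N.
Proof.
  intros Hcv x.
  destruct (cauchy _ _ Hcv (/ 5 ^ (S x))) as [N HN].
  { apply Rlt_gt, Rinv_0_lt_compat, pow_lt; lra. }
  destruct (classic (exists s n b, f n = pi s /\ (N <= n)%nat /\ nth_error (relc s) x = Some b))
    as [[s0 [n0 [b0 [E0 [N0 B0]]]]] | Hno].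
  - exists b0, N. intros s n E Hn b B.
    assert (Hag : nth_error (relc s) x = nth_error (relc s0) x).
    { apply (agree s s0 (S x)); [|lia]. rewrite <- E, <- E0.
      specialize (HN n n0 Hn N0).
      assert (P : 0 < 5 ^ S x) by (apply pow_lt; lra).
      apply (Rmult_lt_compat_r (5 ^ S x)) in HN; auto.
      rewrite Rinv_l in HN by lra. exact HN. }
    rewrite B, B0 in Hag. congruence.
  - exists true, N. intros s n E Hn b B. exfalso. apply Hno. eauto 6.
Qed.

Lemma inf_good f l : Un_cv (fun n => QI2R (f n)) l ->
  exists q, forall b, exists x N, (b < x)%nat /\ good f q x N.
Proof.
  intros Hcv.
  destruct (classic (forall b, exists x N, (b < x)%nat /\ good f true x N)) as [H|H].
  - exists true; exact H.
  - apply not_all_ex_not in H. destruct H as [b0 H0].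
    exists false. intro b. destruct (goodex f l Hcv (S (Nat.max b b0))) as [q [N G]].
    destruct q.
    + exfalso. apply H0. exists (S (Nat.max b b0)), N. split; [lia|exact G].
    + exists (S (Nat.max b b0)), N. split; [lia|exact G].
Qed.

Lemma lenbound (f : nat -> QI) : forall N, exists M, forall s n, f n = pi s -> (n < N)%nat -> (length s <= M)%nat.
Proof.
  induction N as [|N [M HM]].
  - exists 0%nat. intros; lia.
  - destruct (classic (exists s0, f N = pi s0)) as [[s0 E0]|Hno].
    + exists (Nat.max M (length s0)). intros s n E Hn.
      destruct (Nat.eq_dec n N) as [->|Hne].
      * rewrite (pi_len s s0) by congruence. lia.
      * specialize (HM s n E ltac:(lia)). lia.
    + exists M. intros s n E Hn.
      destruct (Nat.eq_dec n N) as [->|Hne].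
      * exfalso; eauto.
      * apply (HM s n E). lia.
Qed.

Fixpoint iterH (H : nat -> nat*nat*nat) (t : nat) : nat*nat*nat :=
  match t with
  | O => H O
  | S k => let p := iterH H k in H (Nat.max (fst (fst p)) (snd p))
  end.

Lemma color f q s n x N : good f q x N -> f n = pi s -> (N <= n)%nat -> (x < length s)%nat ->
  nth x s false = xorb q (hd false s).
Proof.
  intros G E Hn Hx.
  assert (B : nth_error (relc s) x = Some (xorb (nth x s false) (hd false s))).
  { unfold relc. rewrite nth_error_map, (nth_error_nth' s false Hx). reflexivity. }
  specialize (G s n E Hn _ B). subst q.
  destruct (nth x s false), (hd false s); reflexivity.
Qed.

Lemma key f l : Un_cv (fun n => QI2R (f n)) l -> exists A0 A1,
  infinite_nat A0 /\ infinite_nat A1 /\ forall s n, f n = pi s -> S_of A0 s \/ S_of A1 s.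
Proof.
  intro Hcv. destruct (inf_good f l Hcv) as [q Hq].
  assert (E : forall b, exists p : nat*nat*nat, (b < fst (fst p))%nat /\ good f q (fst (fst p)) (snd (fst p))
      /\ forall s n, f n = pi s -> (n < snd (fst p))%nat -> (length s <= snd p)%nat).
  { intro b. destruct (Hq b) as [x [N [Hb G]]]. destruct (lenbound f N) as [M HM].
    exists (x,N,M). simpl; auto. }
  set (H := fun b => proj1_sig (constructive_indefinite_description _ (E b))).
  assert (HS : forall b, (b < fst (fst (H b)))%nat /\ good f q (fst (fst (H b))) (snd (fst (H b)))
      /\ forall s n, f n = pi s -> (n < snd (fst (H b)))%nat -> (length s <= snd (H b))%nat).
  { intro b. exact (proj2_sig (constructive_indefinite_description _ (E b))). }
  clearbody H.
  set (X := fun t => fst (fst (iterH H t))).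
  set (Nt := fun t => snd (fst (iterH H t))).
  set (Mt := fun t => snd (iterH H t)).
  assert (F1 : forall t, good f q (X t) (Nt t) /\
     forall s n, f n = pi s -> (n < Nt t)%nat -> (length s <= Mt t)%nat).
  { intro t; destruct t; unfold X, Nt, Mt; simpl; split; apply HS. }
  assert (F2 : forall t, (X t < X (S t))%nat /\ (Mt t < X (S t))%nat).
  { intro t. unfold X, Mt. simpl. pose proof (proj1 (HS (Nat.max (fst (fst (iterH H t))) (snd (iterH H t))))). lia. }
  assert (F3 : forall t t', (t < t')%nat -> (X (S t) <= X t')%nat).
  { intros t t' Ht. induction t' as [|t' IH]; [lia|].
    destruct (Nat.eq_dec t t') as [->|Hne]; [lia|]. specialize (IH ltac:(lia)).
    pose proof (F2 t'). lia. }
  assert (F4 : forall t, (t <= X t)%nat).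
  { induction t as [|t IH]; [lia|]. pose proof (F2 t). lia. }
  set (A := fun r x => exists t, x = X (2 * t + r)%nat).
  assert (Inf : forall r, infinite_nat (A r)).
  { intros r n. exists (X (2 * n + r)%nat). split; [pose proof (F4 (2*n+r)%nat); lia|]. exists n; reflexivity. }
  exists (A 0%nat), (A 1%nat). split; [apply Inf|]. split; [apply Inf|].
  intros s n Es.
  assert (Col : forall t, (X t < length s)%nat -> (Nt t <= n)%nat -> nth (X t) s false = xorb q (hd false s)).
  { intros t Ht Hn. apply (color f q s n (X t) (Nt t)); auto. apply F1. }
  assert (Uni : forall t t', (X t < length s)%nat -> (X t' < length s)%nat -> (n < Nt t)%nat -> (n < Nt t')%nat -> t = t').
  { intros t t' H1 H2 H3 H4.
    assert (K : forall a b, (a < b)%nat -> (X b < length s)%nat -> (n < Nt a)%nat -> False).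
    { intros a b Hab Hb Ha. pose proof (F3 a b Hab). pose proof (F2 a).
      pose proof (proj2 (F1 a) s n Es Ha). lia. }
    destruct (Nat.lt_trichotomy t t') as [L|[L|L]]; auto; exfalso; eauto. }
  assert (Gen : forall r, (forall u, (X (2*u + r)%nat < length s)%nat -> (Nt (2*u+r)%nat <= n)%nat) -> S_of (A r) s).
  { intros r Hr i j [u1 ->] [u2 ->] Hi Hj. rewrite !Col; auto. }
  destruct (classic (exists t, (X t < length s)%nat /\ (n < Nt t)%nat)) as [[t0 [T1 T2]]|Hno].
  - destruct (Nat.Even_or_Odd t0) as [[m Hm]|[m Hm]].
    + right. apply Gen. intros u Hu. destruct (Compare_dec.le_lt_dec (Nt (2*u+1)%nat) n) as [ok|bad]; auto.
      pose proof (Uni _ _ Hu T1 bad T2). lia.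
    + left. apply Gen. intros u Hu. destruct (Compare_dec.le_lt_dec (Nt (2*u+0)%nat) n) as [ok|bad]; auto.
      pose proof (Uni _ _ Hu T1 bad T2). lia.
  - left. apply Gen. intros u Hu. destruct (Compare_dec.le_lt_dec (Nt (2*u+0)%nat) n) as [ok|bad]; auto.
    exfalso. apply Hno. eauto.
Qed.

Lemma cover_list : forall L, Forall conv_gen L -> exists L', Forall spl_gen L' /\
  forall s, (exists C, In C L /\ C (pi s)) -> exists D, In D L' /\ D s.
Proof.
  induction L as [|C L IH]; intros HF.
  - exists nil. split; [constructor|]. intros s [C [[] _]].
  - inversion HF as [|? ? HC HL]; subst. destruct (IH HL) as [L' [HF' HL']].
    destruct HC as [f [l [_ [Hcv HCiff]]]].
    destruct (key f l Hcv) as [A0 [A1 [I0 [I1 Hcov]]]].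
    exists (S_of A0 :: S_of A1 :: L'). split.
    + constructor; [exists A0; split; [exact I0|tauto]|].
      constructor; [exists A1; split; [exact I1|tauto]|exact HF'].
    + intros s [D [[<-|HD] Hs]].
      * apply HCiff in Hs. destruct Hs as [n Hn].
        destruct (Hcov s n Hn) as [H0|H1]; [exists (S_of A0)|exists (S_of A1)]; simpl; auto.
      * destruct (HL' s (ex_intro _ D (conj HD Hs))) as [D' [HD' Hs']].
        exists D'; simpl; auto.
Qed.

Theorem mainTheorem7 : katetov_le conv Spl.
Proof.
  exists pi. intros A [L [HF Hcov]].
  destruct (cover_list L HF) as [L' [HF' HL']].
  exists L'. split; [exact HF'|]. intros s Hs. apply HL'. apply Hcov. exact Hs.
Qed.
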